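(* Let $p$ (true dynamics) and $\hat p$ (learned model) be dynamics kernels, $\pi_D$ and $\pi$ policies, and $k\ge 0$ an integer. Suppose $$\sup_{t\ge 0}\ \mathbb E_{s\sim d_t^{\pi_D},\,a\sim \pi_D(\cdot\mid s)}\Big[D_{TV}\big(p(\cdot\mid s,a),\hat p(\cdot\mid s,a)\big)\Big]\le \epsilon_m \qquad\text{and}\qquad \sup_{s\in\mathcal S} D_{TV}\big(\pi_D(\cdot\mid s),\pi(\cdot\mid s)\big)\le\epsilon_\pi .$$ Let $\eta[\pi]=\eta(\pi,p)$ and $\eta^{\mathrm{branch}}[\pi]=\eta_k(\pi_D,p;\pi,\hat p)$. Then $$\eta[\pi]\ \ge\ \eta^{\mathrm{branch}}[\pi]-2r_{\max}\left[\frac{\gamma^{k+1}\epsilon_\pi}{(1-\gamma)^2}+\frac{(\gamma^k+2)\,\epsilon_\pi}{1-\gamma}+\frac{k}{1-\gamma}(\epsilon_m+2\epsilon_\pi)\right].$$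
   Context: Let $\mathcal S$ and $\mathcal A$ be countable (e.g. finite) state and action spaces, $\rho_0$ a probability distribution on $\mathcal S$ (initial state distribution), $\gamma\in(0,1)$ a discount factor, and $r:\mathcal S\times\mathcal A\to\mathbb R$ a reward function with $|r(s,a)|\le r_{\max}$ for all $(s,a)$. A policy is a Markov kernel $\pi(a\mid s)$ from $\mathcal S$ to $\mathcal A$; a dynamics kernel is a Markov kernel $q(s'\mid s,a)$ from $\mathcal S\times\mathcal A$ to $\mathcal S$. For a policy $\pi$ and dynamics $q$, the return is $\eta(\pi,q)=\sum_{t\ge0}\gamma^t\,\mathbb E[r(s_t,a_t)]$, where $s_0\sim\rho_0$, $a_t\sim\pi(\cdot\mid s_t)$, $s_{t+1}\sim q(\cdot\mid s_t,a_t)$. For probability distributions $\mu,\nu$ on a countable set, $D_{TV}(\mu,\nu)=\frac12\sum_x|\mu(x)-\nu(x)|$. Here $d_t^{\pi_D}$ denotes the distribution of $s_t$ when $s_0\sim\rho_0$, $a_i\sim\pi_D(\cdot\mid s_i)$, $s_{i+1}\sim p(\cdot\mid s_i,a_i)$. Branched return: given a ''pre-branch'' pair (policy $\pi^{\mathrm{pre}}$, dynamics $q^{\mathrm{pre}}$), a ''post-branch'' pair (policy $\pi^{\mathrm{post}}$, dynamics $q^{\mathrm{post}}$) and an integer $k\ge0$, for each $t\ge0$ let $m_t=\max(t-k,0)$ and generate $s_0\sim\rho_0$; for $0\le i<m_t$: $a_i\sim\pi^{\mathrm{pre}}(\cdot\mid s_i)$, $s_{i+1}\sim q^{\mathrm{pre}}(\cdot\mid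 s_i,a_i)$; for $m_t\le i<t$: $a_i\sim\pi^{\mathrm{post}}(\cdot\mid s_i)$, $s_{i+1}\sim q^{\mathrm{post}}(\cdot\mid s_i,a_i)$; finally $a_t\sim\pi^{\mathrm{post}}(\cdot\mid s_t)$. Let $d_t$ be the law of $(s_t,a_t)$ so produced. The $k$-branched return is $\eta_k(\pi^{\mathrm{pre}},q^{\mathrm{pre}};\pi^{\mathrm{post}},q^{\mathrm{post}})=\sum_{t\ge0}\gamma^t\,\mathbb E_{(s,a)\sim d_t}[r(s,a)]$. (Thus the state at time $t$ is obtained by following the pre-branch pair up to time $t-k$ and then the post-branch pair for the remaining at most $k$ steps; note $\eta_k(\pi,q;\pi,q)=\eta(\pi,q)$.) *)

(* Defs.v *)
From Stdlib Require Import Reals Lra ClassicalEpsilon.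
Open Scope R_scope.

Record CountType := {
  carrier :> Type;
  enc : carrier -> nat;
  dec : nat -> option carrier;
  decK : forall x, dec (enc x) = Some x
}.

(* Limit of a real sequence (0 if the sequence does not converge). *)
Definition lim (u : nat -> R) : R :=
  match excluded_middle_informative (exists l, Un_cv u l) with
  | left H => proj1_sig (constructive_indefinite_description _ H)
  | right _ => 0
  end.

(* The n-th term of the enumeration of f over a countable type
   (each element counted exactly once, at index enc x). *)
Definition cterm (X : CountType) (f : X -> R) (n : nat) : R :=
  match dec X n with
  | Some x => if Nat.eqb (enc X x) n then f x else 0
  | None => 0
  end.

Definition csum (X : CountType) (f : X -> R) : R :=
  lim (fun N => sum_f_R0 (cterm X f) N).

Definition is_dist (X : CountType) (mu : X -> R) : Prop :=
  (forall x, 0 <= mu x) /\ infinite_sum (cterm X mu) 1.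

(* Policies pol s a = pi(a|s); dynamics q s a s' = q(s'|s,a). *)
Definition is_policy (S A : CountType) (pol : S -> A -> R) : Prop :=
  forall s, is_dist A (pol s).
Definition is_dynamics (S A : CountType) (q : S -> A -> S -> R) : Prop :=
  forall s a, is_dist S (q s a).

Definition D_TV (X : CountType) (mu nu : X -> R) : R :=
  / 2 * csum X (fun x => Rabs (mu x - nu x)).

Definition step (S A : CountType) (pol : S -> A -> R) (q : S -> A -> S -> R)
  (mu : S -> R) : S -> R :=
  fun s' => csum S (fun s => csum A (fun a => mu s * pol s a * q s a s')).

Fixpoint iter_step (S A : CountType) (n : nat) (pol : S -> A -> R)
  (q : S -> A -> S -> R) (mu : S -> R) : S -> R :=
  match n with
  | O => mu
  | Datatypes.S n' => step S A pol q (iter_step S A n' pol q mu)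
  end.

Definition state_dist (S A : CountType) (rho0 : S -> R) (pol : S -> A -> R)
  (q : S -> A -> S -> R) (t : nat) : S -> R :=
  iter_step S A t pol q rho0.

Definition expect_sa (S A : CountType) (mu : S -> R) (pol : S -> A -> R)
  (f : S -> A -> R) : R :=
  csum S (fun s => csum A (fun a => mu s * pol s a * f s a)).

Definition eta (S A : CountType) (rho0 : S -> R) (gamma : R)
  (r : S -> A -> R) (pol : S -> A -> R) (q : S -> A -> S -> R) : R :=
  lim (fun N => sum_f_R0 (fun t =>
    gamma ^ t * expect_sa S A (state_dist S A rho0 pol q t) pol r) N).

(* Law of s_t in the k-branched rollout: m_t = max(t-k,0) = (t-k)%nat pre-branch
   steps, then t - m_t = min(t,k) post-branch steps. *)
Definition branch_state_dist (S A : CountType) (rho0 : S -> R)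
  (pol_pre : S -> A -> R) (q_pre : S -> A -> S -> R)
  (pol_post : S -> A -> R) (q_post : S -> A -> S -> R) (k t : nat) : S -> R :=
  iter_step S A (t - (t - k)) pol_post q_post
    (iter_step S A (t - k) pol_pre q_pre rho0).

Definition eta_branch (S A : CountType) (rho0 : S -> R) (gamma : R)
  (r : S -> A -> R) (pol_pre : S -> A -> R) (q_pre : S -> A -> S -> R)
  (pol_post : S -> A -> R) (q_post : S -> A -> S -> R) (k : nat) : R :=
  lim (fun N => sum_f_R0 (fun t =>
    gamma ^ t * expect_sa S A
      (branch_state_dist S A rho0 pol_pre q_pre pol_post q_post k t)
      pol_post r) N).

(* Main.v *)
Require Import Defs.
From Stdlib Require Import Reals Lra Lia FunctionalExtensionality Classical ClassicalEpsilon.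
Open Scope R_scope.

Lemma Un_cv_ext u v l : (forall n, u n = v n) -> Un_cv u l -> Un_cv v l.
Proof. intros H H0 e he; destruct (H0 e he) as [N HN]; exists N; intros; rewrite <- H; auto. Qed.

Lemma Un_cv_const c : Un_cv (fun _ => c) c.
Proof. intros e he; exists 0%nat; intros; unfold R_dist; rewrite Rminus_diag, Rabs_R0; lra. Qed.

Lemma lim_eq u l : Un_cv u l -> lim u = l.
Proof.
  intros H. unfold lim. destruct (excluded_middle_informative _) as [e|n].
  - destruct (constructive_indefinite_description _ e) as [l' Hl']. simpl. eapply UL_sequence; eauto.
  - exfalso. apply n. eauto.
Qed.

Lemma nonneg_cv (a : nat -> R) B : (forall n, 0 <= a n) -> (forall N, sum_f_R0 a N <= B) -> {l | Un_cv (sum_f_R0 a) l}.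
Proof.
  intros Ha HB. apply growing_cv.
  - intro n. simpl. specialize (Ha (S n)). lra.
  - exists B. intros x [N ->]. apply HB.
Qed.

Lemma abs_cv (a : nat -> R) B : (forall N, sum_f_R0 (fun n => Rabs (a n)) N <= B) -> {l | Un_cv (sum_f_R0 a) l}.
Proof.
  intros HB.
  assert (Hle: forall N, sum_f_R0 a N <= sum_f_R0 (fun n => Rabs (a n)) N).
  { intro N. apply sum_Rle. intros; apply Rle_abs. }
  destruct (nonneg_cv (fun n => Rabs (a n) + a n) (2*B)) as [l1 H1].
  - intro n. pose proof (Rle_abs (- a n)). rewrite Rabs_Ropp in H. lra.
  - intro N. rewrite sum_plus. pose proof (HB N). pose proof (Hle N). lra.
  - destruct (nonneg_cv (fun n => Rabs (a n)) B) as [l2 H2].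
    + intro; apply Rabs_pos.
    + auto.
    + exists (l1 - l2). pose proof (CV_minus _ _ _ _ H1 H2). eapply Un_cv_ext; [|exact H].
      intro n. simpl. rewrite sum_plus. ring.
Qed.

Section Sums.
Variable X : CountType.

Lemma cterm_cases n : (exists x, forall g, cterm X g n = g x) \/ (forall g, cterm X g n = 0).
Proof.
  unfold cterm. destruct (dec X n) as [x|].
  - destruct (Nat.eqb (enc X x) n); [left; exists x|right]; auto.
  - right; auto.
Qed.

Lemma cterm_enc f x : cterm X f (enc X x) = f x.
Proof. unfold cterm. rewrite decK, Nat.eqb_refl. auto. Qed.

Definition summ (f : X -> R) := exists B, forall N, sum_f_R0 (fun n => Rabs (cterm X f n)) N <= B.
Definition nrm (f : X -> R) := csum X (fun x => Rabs (f x)).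

Lemma csum_cv f : summ f -> Un_cv (sum_f_R0 (cterm X f)) (csum X f).
Proof.
  intros [B HB]. destruct (abs_cv _ B HB) as [l Hl]. unfold csum. rewrite (lim_eq (fun N => sum_f_R0 (cterm X f) N) l Hl). auto.
Qed.

Lemma sum_ext (a b : nat -> R) N : (forall n, a n = b n) -> sum_f_R0 a N = sum_f_R0 b N.
Proof. intros H; induction N; simpl; rewrite ?IHN, ?H; auto. Qed.

Lemma summ_dom f g : (forall x, Rabs (f x) <= Rabs (g x)) -> summ g -> summ f.
Proof.
  intros H [B HB]. exists B. intro N. eapply Rle_trans; [|apply (HB N)]. apply sum_Rle. intros n _.
  destruct (cterm_cases n) as [[x Hx]|Hx]; rewrite !Hx; auto. lra.
Qed.

Lemma summ_plus f g : summ f -> summ g -> summ (fun x => f x + g x).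
Proof.
  intros [B1 H1] [B2 H2]. exists (B1+B2). intro N. specialize (H1 N). specialize (H2 N).
  eapply Rle_trans; [|apply Rplus_le_compat; eauto]. rewrite <- sum_plus. apply sum_Rle. intros n _.
  destruct (cterm_cases n) as [[x Hx]|Hx]; rewrite !Hx. apply Rabs_triang. rewrite Rabs_R0; lra.
Qed.

Lemma summ_scal c f : summ f -> summ (fun x => c * f x).
Proof.
  intros [B H1]. exists (Rabs c * B). intro N. specialize (H1 N).
  apply Rle_trans with (sum_f_R0 (fun i => Rabs (cterm X f i) * Rabs c) N).
  apply sum_Rle. intros n _. destruct (cterm_cases n) as [[x Hx]|Hx]; rewrite !Hx.
  rewrite Rabs_mult; lra. rewrite Rabs_R0; lra.
  rewrite <- scal_sum. apply Rmult_le_compat_l; auto. apply Rabs_pos.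
Qed.

Lemma summ_abs f : summ f -> summ (fun x => Rabs (f x)).
Proof. intros; eapply summ_dom; eauto. intro; rewrite Rabs_Rabsolu; lra. Qed.

Lemma summ_opp f : summ f -> summ (fun x => - f x).
Proof. intros; eapply summ_dom; eauto. intro; rewrite Rabs_Ropp; lra. Qed.

Lemma summ_minus f g : summ f -> summ g -> summ (fun x => f x - g x).
Proof. intros; apply summ_plus; auto; apply summ_opp; auto. Qed.

Lemma summ_0 : summ (fun _ => 0).
Proof. exists 0. intro N. induction N; simpl; destruct (cterm_cases 0) as [[x Hx]|Hx]; try rewrite Hx;
  try (destruct (cterm_cases (S N)) as [[y Hy]|Hy]; rewrite Hy); rewrite ?Rabs_R0; lra. Qed.

Lemma csum_plus f g : summ f -> summ g -> csum X (fun x => f x + g x) = csum X f + csum X g.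
Proof.
  intros Hf Hg. apply lim_eq. eapply Un_cv_ext; [|apply (CV_plus _ _ _ _ (csum_cv f Hf) (csum_cv g Hg))].
  intro N. cbv beta. rewrite <- sum_plus. apply sum_ext. intro n. destruct (cterm_cases n) as [[x Hx]|Hx]; rewrite !Hx; lra.
Qed.

Lemma csum_scal c f : summ f -> csum X (fun x => c * f x) = c * csum X f.
Proof.
  intros Hf. apply lim_eq. eapply Un_cv_ext; [|apply (CV_mult _ _ _ _ (Un_cv_const c) (csum_cv f Hf))].
  intro N. simpl. rewrite scal_sum. apply sum_ext. intro n. destruct (cterm_cases n) as [[x Hx]|Hx]; rewrite !Hx; lra.
Qed.

Lemma csum_minus f g : summ f -> summ g -> csum X (fun x => f x - g x) = csum X f - csum X g.
Proof.
  intros Hf Hg. unfold Rminus. rewrite csum_plus; auto. 2: apply summ_opp; auto.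
  replace (fun x => - g x) with (fun x => -1 * g x) by (extensionality x; ring).
  rewrite csum_scal; auto. ring.
Qed.

Lemma csum_0 : csum X (fun _ => 0) = 0.
Proof.
  replace (fun _ : X => 0) with (fun x : X => 0 * 0) by (extensionality x; ring).
  rewrite csum_scal. ring. apply summ_0.
Qed.

Lemma csum_le f g : summ f -> summ g -> (forall x, f x <= g x) -> csum X f <= csum X g.
Proof.
  intros Hf Hg H. eapply Rle_cv_lim; [|apply csum_cv; eauto|apply csum_cv; eauto].
  intro N. apply sum_Rle. intros n _. destruct (cterm_cases n) as [[x Hx]|Hx]; rewrite !Hx; auto. lra.
Qed.

Lemma csum_ge0 f : summ f -> (forall x, 0 <= f x) -> 0 <= csum X f.
Proof. intros. rewrite <- csum_0. apply csum_le; auto. apply summ_0. Qed.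

Lemma csum_abs f : summ f -> Rabs (csum X f) <= nrm f.
Proof.
  intros Hf. unfold nrm. apply Rabs_le. split.
  - replace (- csum X (fun x => Rabs (f x))) with (csum X (fun x => -1 * Rabs (f x))).
    apply csum_le; auto. apply summ_scal, summ_abs; auto. intro x. pose proof (Rle_abs (- f x)). rewrite Rabs_Ropp in H. lra.
    rewrite csum_scal. ring. apply summ_abs; auto.
  - apply csum_le; auto. apply summ_abs; auto. intro; apply Rle_abs.
Qed.

Lemma nrm_ge0 f : summ f -> 0 <= nrm f.
Proof. intros; apply csum_ge0. apply summ_abs; auto. intro; apply Rabs_pos. Qed.

Lemma csum_bound f B : (forall x, 0 <= f x) -> (forall N, sum_f_R0 (cterm X f) N <= B) -> summ f /\ csum X f <= B.
Proof.
  intros H0 HB.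
  assert (Ha: forall n, Rabs (cterm X f n) = cterm X f n).
  { intro n. destruct (cterm_cases n) as [[x Hx]|Hx]; rewrite !Hx. apply Rabs_pos_eq; auto. apply Rabs_R0. }
  assert (summ f). { exists B. intro N. rewrite (sum_ext _ _ N Ha). auto. }
  split; auto. eapply Rle_cv_lim; [|apply csum_cv; eauto|apply Un_cv_const]. auto.
Qed.

Lemma psum_le f N : summ f -> (forall x, 0 <= f x) -> sum_f_R0 (cterm X f) N <= csum X f.
Proof.
  intros Hf H0. apply growing_ineq; [|apply csum_cv; auto].
  intro n; simpl. destruct (cterm_cases (S n)) as [[x Hx]|Hx]; rewrite !Hx; auto. specialize (H0 x); lra. lra.
Qed.

Lemma term_le f x : summ f -> (forall x, 0 <= f x) -> f x <= csum X f.
Proof.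
  intros Hf H0. eapply Rle_trans; [|apply (psum_le f (enc X x)); auto].
  rewrite <- (cterm_enc f x) at 1. destruct (enc X x). simpl; lra. simpl.
  assert (0 <= sum_f_R0 (cterm X f) n). apply cond_pos_sum. intro m. destruct (cterm_cases m) as [[y Hy]|Hy]; rewrite !Hy; auto. lra.
  lra.
Qed.

Lemma csum_fin (F : nat -> X -> R) N : (forall m, summ (F m)) ->
  summ (fun x => sum_f_R0 (fun m => F m x) N) /\ csum X (fun x => sum_f_R0 (fun m => F m x) N) = sum_f_R0 (fun m => csum X (F m)) N.
Proof.
  intros H. induction N; simpl.
  - split. apply H. f_equal.
  - destruct IHN as [H1 H2]. split. apply summ_plus; auto. rewrite csum_plus; auto. rewrite H2. auto.
Qed.

Lemma dist_prop mu : is_dist X mu -> (forall x, 0 <= mu x) /\ summ mu /\ csum X mu = 1.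
Proof.
  intros [H0 H1]. assert (csum X mu = 1). { unfold csum. apply lim_eq. exact H1. }
  split; auto. split; auto.
  assert (HB: forall N, sum_f_R0 (cterm X mu) N <= 1).
  { intro N. apply growing_ineq; auto. intro n; simpl. destruct (cterm_cases (S n)) as [[x Hx]|Hx]; rewrite !Hx; auto. specialize (H0 x); lra. lra. }
  apply (csum_bound mu 1 H0 HB).
Qed.

End Sums.
Arguments summ {X}. Arguments nrm {X}.

Lemma cterm_csum (X Y : CountType) (k : X -> Y -> R) m :
  cterm Y (fun y => csum X (fun x => k x y)) m = csum X (fun x => cterm Y (k x) m).
Proof.
  destruct (cterm_cases Y m) as [[y Hy]|Hy].
  - rewrite Hy. f_equal. extensionality x. rewrite Hy. auto.
  - rewrite Hy. replace (fun x => cterm Y (k x) m) with (fun _ : X => 0) by (extensionality x; rewrite Hy; auto).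
    rewrite csum_0; auto.
Qed.

Lemma csum_abs_ge0 X f : 0 <= csum X (fun x => Rabs (f x)) \/ True.
Proof. auto. Qed.

Lemma dbl (X Y : CountType) (h : X -> Y -> R) :
  (forall x, summ (h x)) -> summ (fun x => csum Y (fun y => Rabs (h x y))) ->
  (forall y, summ (fun x => h x y)) /\ summ (fun y => csum X (fun x => h x y)) /\
  nrm (fun y => csum X (fun x => h x y)) <= csum X (fun x => csum Y (fun y => Rabs (h x y))).
Proof.
  intros Hh HW.
  assert (W0: forall x, 0 <= csum Y (fun y => Rabs (h x y))).
  { intro x. apply (nrm_ge0 Y). auto. }
  assert (H1: forall y, summ (fun x => h x y)).
  { intro y. eapply summ_dom; [|exact HW]. intro x. cbv beta. rewrite (Rabs_pos_eq (csum _ _)); auto.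
    apply (term_le Y (fun y => Rabs (h x y))). apply summ_abs; auto. intro; apply Rabs_pos. }
  assert (HG: summ (fun y => csum X (fun x => Rabs (h x y))) /\
               csum Y (fun y => csum X (fun x => Rabs (h x y))) <= csum X (fun x => csum Y (fun y => Rabs (h x y)))).
  { apply csum_bound.
    - intro y. apply (nrm_ge0 X). auto.
    - intro N. rewrite (sum_ext _ _ N (cterm_csum X Y (fun x y => Rabs (h x y)))).
      assert (Hs: forall m, summ (fun x => cterm Y (fun y => Rabs (h x y)) m)).
      { intro m. destruct (cterm_cases Y m) as [[y Hy]|Hy].
        - replace (fun x => cterm Y (fun y0 => Rabs (h x y0)) m) with (fun x => Rabs (h x y)) by (extensionality x; rewrite Hy; auto).
          apply summ_abs; auto.
        - replace (fun x => cterm Y (fun y0 => Rabs (h x y0)) m) with (fun _ : X => 0) by (extensionality x; rewrite Hy; auto).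
          apply summ_0. }
      destruct (csum_fin X (fun m x => cterm Y (fun y => Rabs (h x y)) m) N Hs) as [Hf Hfe].
      rewrite <- Hfe. apply csum_le; auto. intro x. apply psum_le. apply summ_abs; auto. intro; apply Rabs_pos. }
  destruct HG as [HG1 HG2].
  assert (Hb: forall y, Rabs (csum X (fun x => h x y)) <= csum X (fun x => Rabs (h x y))).
  { intro y. apply csum_abs; auto. }
  assert (H2: summ (fun y => csum X (fun x => h x y))).
  { eapply summ_dom; [|exact HG1]. intro y. cbv beta. rewrite (Rabs_pos_eq (csum X (fun x => Rabs (h x y)))); auto.
    apply (nrm_ge0 X); auto. }
  split; auto. split; auto.
  eapply Rle_trans; [|exact HG2]. apply csum_le; auto. apply summ_abs; auto.
Qed.

Section MDP.
Variables S A : CountType.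

Definition nestok (H : S -> A -> S -> R) (w : S -> A -> R) :=
  (forall s a, summ (H s a)) /\
  (forall s a, csum S (fun s' => Rabs (H s a s')) <= w s a) /\
  (forall s, summ (w s)) /\ summ (fun s => csum A (w s)).

Lemma nested H w : nestok H w ->
  (forall s' s, summ (fun a => H s a s')) /\
  (forall s', summ (fun s => csum A (fun a => H s a s'))) /\
  summ (fun s' => csum S (fun s => csum A (fun a => H s a s'))) /\
  nrm (fun s' => csum S (fun s => csum A (fun a => H s a s'))) <= csum S (fun s => csum A (w s)).
Proof.
  intros [H1 [H2 [H3 H4]]].
  assert (D: forall s, (forall s', summ (fun a => H s a s')) /\ summ (fun s' => csum A (fun a => H s a s')) /\
     nrm (fun s' => csum A (fun a => H s a s')) <= csum A (w s)).
  { intro s. destruct (dbl A S (H s)) as [D1 [D2 D3]]; auto.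
    - eapply summ_dom; [|exact (H3 s)]. intro a. cbv beta. rewrite Rabs_pos_eq. 2: apply (nrm_ge0 S); auto.
      pose proof (H2 s a) as Q1. pose proof (nrm_ge0 S (H s a) (H1 s a)) as Q2. unfold nrm in Q2. rewrite Rabs_pos_eq; lra.
    - split; auto. split; auto. eapply Rle_trans; [exact D3|]. apply csum_le; auto.
      + eapply summ_dom; [|exact (H3 s)]. intro a. cbv beta. rewrite Rabs_pos_eq. 2: apply (nrm_ge0 S); auto.
        pose proof (H2 s a) as Q1. pose proof (nrm_ge0 S (H s a) (H1 s a)) as Q2. unfold nrm in Q2. rewrite Rabs_pos_eq; lra. }
  destruct (dbl S S (fun s s' => csum A (fun a => H s a s'))) as [E1 [E2 E3]].
  - intro s; apply D.
  - eapply summ_dom; [|exact H4]. intro s. cbv beta. destruct (D s) as [_ [Ds Dle]].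
    pose proof (nrm_ge0 S _ Ds). unfold nrm in *. rewrite !Rabs_pos_eq; lra.
  - split. intros s' s; apply D. split; auto. split; auto.
    eapply Rle_trans; [exact E3|]. apply csum_le; auto.
    + eapply summ_dom; [|exact H4]. intro s. cbv beta. destruct (D s) as [_ [Ds Dle]].
      pose proof (nrm_ge0 S _ Ds). unfold nrm in *. rewrite !Rabs_pos_eq; lra.
    + intro s. apply D.
Qed.

Definition adm H := exists w, nestok H w.

Lemma nested_diff H1 H2 w : adm H1 -> adm H2 ->
  (forall s a, csum S (fun s' => Rabs (H1 s a s' - H2 s a s')) <= w s a) ->
  (forall s, summ (w s)) -> summ (fun s => csum A (w s)) ->
  summ (fun s' => csum S (fun s => csum A (fun a => H1 s a s'))) /\
  summ (fun s' => csum S (fun s => csum A (fun a => H2 s a s'))) /\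
  nrm (fun s' => csum S (fun s => csum A (fun a => H1 s a s')) - csum S (fun s => csum A (fun a => H2 s a s')))
   <= csum S (fun s => csum A (w s)).
Proof.
  intros [w1 K1] [w2 K2] Hw Hw1 Hw2.
  destruct (nested _ _ K1) as [N1 [N2 [N3 N4]]].
  destruct (nested _ _ K2) as [M1 [M2 [M3 M4]]].
  destruct (nested (fun s a s' => H1 s a s' - H2 s a s') w) as [_ [_ [_ L]]].
  { split; [|split; auto]. intros; apply summ_minus; [apply K1|apply K2]. }
  split; auto. split; auto.
  eapply Rle_trans; [|exact L]. right. unfold nrm. f_equal. extensionality s'. f_equal.
  rewrite <- csum_minus; auto. f_equal. extensionality s. rewrite csum_minus; auto.
Qed.

Lemma step_nest pol q mu : summ mu -> is_policy S A pol -> is_dynamics S A q ->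
  nestok (fun s a s' => mu s * pol s a * q s a s') (fun s a => Rabs (mu s) * pol s a).
Proof.
  intros Hm Hp Hq.
  assert (Hpol: forall s a, 0 <= pol s a) by (intros s a; apply (dist_prop A _ (Hp s))).
  split; [|split; [|split]].
  - intros s a. apply summ_scal. apply (dist_prop S _ (Hq s a)).
  - intros s a. right. destruct (dist_prop S _ (Hq s a)) as [q0 [qs q1]].
    replace (fun s' => Rabs (mu s * pol s a * q s a s')) with (fun s' => Rabs (mu s) * pol s a * q s a s').
    rewrite csum_scal; auto. rewrite q1; ring.
    extensionality s'. rewrite !Rabs_mult, (Rabs_pos_eq (pol s a)), (Rabs_pos_eq (q s a s')); auto.
  - intro s. apply summ_scal. apply (dist_prop A _ (Hp s)).
  - replace (fun s => csum A (fun a => Rabs (mu s) * pol s a)) with (fun s => Rabs (mu s)).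
    apply summ_abs; auto. extensionality s. rewrite csum_scal. rewrite (proj2 (proj2 (dist_prop A _ (Hp s)))). ring.
    apply (dist_prop A _ (Hp s)).
Qed.

Lemma step_adm pol q mu : summ mu -> is_policy S A pol -> is_dynamics S A q ->
  adm (fun s a s' => mu s * pol s a * q s a s').
Proof. intros; eexists; apply step_nest; eauto. Qed.

End MDP.

Section C.
Variables S A : CountType.

Lemma step_summ pol q mu : summ mu -> is_policy S A pol -> is_dynamics S A q ->
  summ (step S A pol q mu) /\ nrm (step S A pol q mu) <= nrm mu.
Proof.
  intros Hm Hp Hq. destruct (nested S A _ _ (step_nest S A pol q mu Hm Hp Hq)) as [_ [_ [N3 N4]]].
  split. exact N3. eapply Rle_trans. exact N4. right. unfold nrm. f_equal. extensionality s.
  rewrite csum_scal. rewrite (proj2 (proj2 (dist_prop A _ (Hp s)))). ring. apply (dist_prop A _ (Hp s)).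
Qed.

Lemma nonexp pol q mu nu : summ mu -> summ nu -> is_policy S A pol -> is_dynamics S A q ->
  nrm (fun s' => step S A pol q mu s' - step S A pol q nu s') <= nrm (fun s => mu s - nu s).
Proof.
  intros Hm Hn Hp Hq.
  assert (Hpol: forall s a, 0 <= pol s a) by (intros s a; apply (dist_prop A _ (Hp s))).
  destruct (nested_diff S A _ _ (fun s a => Rabs (mu s - nu s) * pol s a) (step_adm S A pol q mu Hm Hp Hq) (step_adm S A pol q nu Hn Hp Hq))
    as [_ [_ L]].
  - intros s a. right. destruct (dist_prop S _ (Hq s a)) as [q0 [qs q1]].
    replace (fun s' => Rabs (mu s * pol s a * q s a s' - nu s * pol s a * q s a s')) with (fun s' => Rabs (mu s - nu s) * pol s a * q s a s').
    rewrite csum_scal; auto. rewrite q1; ring.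
    extensionality s'. replace (mu s * pol s a * q s a s' - nu s * pol s a * q s a s') with ((mu s - nu s) * pol s a * q s a s') by ring.
    rewrite !Rabs_mult, (Rabs_pos_eq (pol s a)), (Rabs_pos_eq (q s a s')); auto.
  - intro s. apply summ_scal. apply (dist_prop A _ (Hp s)).
  - replace (fun s => csum A (fun a => Rabs (mu s - nu s) * pol s a)) with (fun s => Rabs (mu s - nu s)).
    apply summ_abs, summ_minus; auto. extensionality s. rewrite csum_scal. rewrite (proj2 (proj2 (dist_prop A _ (Hp s)))). ring.
    apply (dist_prop A _ (Hp s)).
  - eapply Rle_trans. exact L. right. unfold nrm. f_equal. extensionality s.
    rewrite csum_scal. rewrite (proj2 (proj2 (dist_prop A _ (Hp s)))). ring. apply (dist_prop A _ (Hp s)).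
Qed.

Lemma DTV_bounds (X : CountType) mu nu : is_dist X mu -> is_dist X nu ->
  summ (fun x => mu x - nu x) /\ 0 <= D_TV X mu nu <= 1.
Proof.
  intros Hm Hn. destruct (dist_prop X _ Hm) as [m0 [ms m1]]. destruct (dist_prop X _ Hn) as [n0 [ns n1]].
  assert (summ (fun x => mu x - nu x)) by (apply summ_minus; auto).
  split; auto. unfold D_TV. pose proof (nrm_ge0 X _ H). unfold nrm in H0. split. lra.
  assert (csum X (fun x => Rabs (mu x - nu x)) <= csum X (fun x => mu x + nu x)).
  { apply csum_le. apply summ_abs; auto. apply summ_plus; auto. intro x.
    pose proof (Rabs_triang (mu x) (- nu x)) as T. rewrite Rabs_Ropp, (Rabs_pos_eq (mu x)), (Rabs_pos_eq (nu x)) in T; auto. }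
  rewrite csum_plus in H1; auto. lra.
Qed.

Lemma abs_ineq nu p1 p2 q1 q2 : 0 <= nu -> 0 <= p1 -> 0 <= q2 ->
  Rabs (nu * p1 * q1 - nu * p2 * q2) <= nu * p1 * Rabs (q1 - q2) + nu * Rabs (p1 - p2) * q2.
Proof.
  intros. replace (nu * p1 * q1 - nu * p2 * q2) with (nu * p1 * (q1 - q2) + nu * (p1 - p2) * q2) by ring.
  pose proof (Rabs_triang (nu * p1 * (q1 - q2)) (nu * (p1 - p2) * q2)) as T.
  rewrite (Rabs_mult (nu * p1)), (Rabs_mult nu p1), (Rabs_mult (nu * (p1 - p2))), (Rabs_mult nu (p1 - p2)) in T.
  rewrite (Rabs_pos_eq nu), (Rabs_pos_eq p1), (Rabs_pos_eq q2) in T; auto.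
Qed.

Lemma onestep pol1 q1 pol2 q2 nu : summ nu -> (forall s, 0 <= nu s) ->
  is_policy S A pol1 -> is_dynamics S A q1 -> is_policy S A pol2 -> is_dynamics S A q2 ->
  nrm (fun s' => step S A pol1 q1 nu s' - step S A pol2 q2 nu s') <=
  2 * expect_sa S A nu pol1 (fun s a => D_TV S (q1 s a) (q2 s a)) + 2 * csum S (fun s => nu s * D_TV A (pol1 s) (pol2 s)).
Proof.
  intros Hn Hn0 Hp1 Hq1 Hp2 Hq2.
  assert (P1: forall s, (forall a, 0 <= pol1 s a) /\ summ (pol1 s) /\ csum A (pol1 s) = 1) by (intro; apply dist_prop; auto).
  assert (P2: forall s, (forall a, 0 <= pol2 s a) /\ summ (pol2 s) /\ csum A (pol2 s) = 1) by (intro; apply dist_prop; auto).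
  assert (Q1: forall s a, (forall s', 0 <= q1 s a s') /\ summ (q1 s a) /\ csum S (q1 s a) = 1) by (intros; apply dist_prop; auto).
  assert (Q2: forall s a, (forall s', 0 <= q2 s a s') /\ summ (q2 s a) /\ csum S (q2 s a) = 1) by (intros; apply dist_prop; auto).
  set (D := fun s a => D_TV S (q1 s a) (q2 s a)).
  assert (DB: forall s a, summ (fun x => q1 s a x - q2 s a x) /\ 0 <= D s a <= 1) by (intros; apply DTV_bounds; auto).
  assert (DA: forall s, summ (fun x => pol1 s x - pol2 s x) /\ 0 <= D_TV A (pol1 s) (pol2 s) <= 1) by (intros; apply DTV_bounds; auto).
  set (w1 := fun s a => nu s * pol1 s a * D s a).
  set (w2 := fun s a => nu s * Rabs (pol1 s a - pol2 s a)).
  assert (Sw1: forall s, summ (w1 s)).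
  { intro s. eapply summ_dom; [|apply summ_scal; apply (P1 s)]. intro a. cbv beta. unfold w1.
    instantiate (1 := nu s). pose proof (DB s a). pose proof (proj1 (P1 s) a). pose proof (Hn0 s).
    destruct H as [_ [Hd1 Hd2]]. assert (0 <= nu s * pol1 s a) by nra.
    rewrite (Rabs_pos_eq (nu s * pol1 s a * D s a)), (Rabs_pos_eq (nu s * pol1 s a)); nra. }
  assert (Sw2: forall s, summ (w2 s)).
  { intro s. apply summ_scal. apply summ_abs. apply (DA s). }
  assert (Cw1: forall s, 0 <= csum A (w1 s) <= nu s).
  { intro s. pose proof (Hn0 s). split. apply csum_ge0; auto. intro a. unfold w1. destruct (DB s a) as [_ [? ?]]. pose proof (proj1 (P1 s) a). 
    assert (0 <= nu s * pol1 s a) by nra. nra.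
    replace (nu s) with (csum A (fun a => nu s * pol1 s a)). apply csum_le; auto. apply summ_scal, P1.
    intro a. unfold w1. destruct (DB s a) as [_ [? ?]]. pose proof (proj1 (P1 s) a). assert (0 <= nu s * pol1 s a) by nra. nra.
    rewrite csum_scal. rewrite (proj2 (proj2 (P1 s))). ring. apply P1. }
  assert (Cw2: forall s, csum A (w2 s) = 2 * (nu s * D_TV A (pol1 s) (pol2 s))).
  { intro s. unfold w2. rewrite csum_scal. unfold D_TV. field. apply summ_abs, DA. }
  assert (Sc1: summ (fun s => csum A (w1 s))).
  { eapply summ_dom; [|exact Hn]. intro s. cbv beta. pose proof (Cw1 s). rewrite !Rabs_pos_eq; lra. }
  assert (Sc2: summ (fun s => csum A (w2 s))).
  { replace (fun s => csum A (w2 s)) with (fun s => 2 * (nu s * D_TV A (pol1 s) (pol2 s))) by (extensionality s; auto).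
    apply summ_scal. eapply summ_dom; [|exact Hn]. intro s. cbv beta. pose proof (DA s). pose proof (Hn0 s). rewrite !Rabs_pos_eq; nra. }
  destruct (nested_diff S A _ _ (fun s a => 2 * w1 s a + w2 s a) (step_adm S A pol1 q1 nu Hn Hp1 Hq1) (step_adm S A pol2 q2 nu Hn Hp2 Hq2))
    as [_ [_ L]].
  - intros s a. destruct (Q1 s a) as [q10 [q1s q11]]. destruct (Q2 s a) as [q20 [q2s q21]].
    eapply Rle_trans. apply csum_le with (g := fun s' => nu s * pol1 s a * Rabs (q1 s a s' - q2 s a s') + nu s * Rabs (pol1 s a - pol2 s a) * q2 s a s').
    + apply summ_abs. apply summ_minus; apply summ_scal; auto.
    + apply summ_plus; apply summ_scal; auto. apply summ_abs, DB.
    + intro s'. apply abs_ineq; auto. apply P1.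
    + right. rewrite csum_plus, !csum_scal, q21; auto. unfold w1, w2, D, D_TV. field. apply summ_abs, DB. apply summ_scal, summ_abs, DB. apply summ_scal; auto.
  - intro s. apply summ_plus; auto. apply summ_scal; auto.
  - replace (fun s => csum A (fun a => 2 * w1 s a + w2 s a)) with (fun s => 2 * csum A (w1 s) + csum A (w2 s)).
    apply summ_plus; auto. apply summ_scal; auto.
    extensionality s. rewrite csum_plus, csum_scal; auto. apply summ_scal; auto.
  - eapply Rle_trans. exact L. right.
    replace (fun s => csum A (fun a => 2 * w1 s a + w2 s a)) with (fun s => 2 * csum A (w1 s) + csum A (w2 s)).
    2: { extensionality s. rewrite csum_plus, csum_scal; auto. apply summ_scal; auto. }
    rewrite csum_plus, csum_scal; auto. 2: apply summ_scal; auto.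
    replace (fun s => csum A (w2 s)) with (fun s => 2 * (nu s * D_TV A (pol1 s) (pol2 s))) by (extensionality s; auto).
    rewrite csum_scal. unfold expect_sa, w1. reflexivity.
    eapply summ_dom; [|exact Hn]. intro s. cbv beta. pose proof (DA s). pose proof (Hn0 s). rewrite !Rabs_pos_eq; nra.
Qed.

End C.

Section D.
Variables S A : CountType.

Definition pm (mu : S -> R) := (forall x, 0 <= mu x) /\ summ mu /\ csum S mu <= 1.

Lemma nrm_pos mu : (forall x, 0 <= mu x) -> nrm mu = csum S mu.
Proof. intros. unfold nrm. f_equal. extensionality x. apply Rabs_pos_eq; auto. Qed.

Lemma step_pm pol q mu : pm mu -> is_policy S A pol -> is_dynamics S A q -> pm (step S A pol q mu).
Proof.
  intros [H0 [Hs H1]] Hp Hq.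
  assert (Hpol: forall s a, 0 <= pol s a) by (intros s a; apply (dist_prop A _ (Hp s))).
  assert (Hq0: forall s a s', 0 <= q s a s') by (intros s a; apply (dist_prop S _ (Hq s a))).
  destruct (nested S A _ _ (step_nest S A pol q mu Hs Hp Hq)) as [N1 [N2 _]].
  destruct (step_summ S A pol q mu Hs Hp Hq) as [T1 T2].
  assert (Z: forall x, 0 <= step S A pol q mu x).
  { intro x. unfold step. apply csum_ge0. apply N2. intro s. apply csum_ge0. apply N1.
    intro a. apply Rmult_le_pos; auto. apply Rmult_le_pos; auto. }
  split; auto. split; auto. rewrite (nrm_pos _ Z), (nrm_pos _ H0) in T2. lra.
Qed.

Lemma iter_pm pol q mu n : pm mu -> is_policy S A pol -> is_dynamics S A q -> pm (iter_step S A n pol q mu).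
Proof. intros; induction n; simpl; auto. apply step_pm; auto. Qed.

Lemma iter_add pol q mu n m : iter_step S A n pol q (iter_step S A m pol q mu) = iter_step S A (n + m) pol q mu.
Proof. induction n; simpl; auto. rewrite IHn; auto. Qed.

Lemma nrm_tri (f g h : S -> R) : summ f -> summ g -> summ h ->
  nrm (fun x => f x - h x) <= nrm (fun x => f x - g x) + nrm (fun x => g x - h x).
Proof.
  intros. unfold nrm. rewrite <- csum_plus. apply csum_le.
  apply summ_abs, summ_minus; auto. apply summ_plus; apply summ_abs, summ_minus; auto.
  intro x. replace (f x - h x) with ((f x - g x) + (g x - h x)) by ring. apply Rabs_triang.
  apply summ_abs, summ_minus; auto. apply summ_abs, summ_minus; auto.
Qed.

Lemma nrm_sym f g : nrm (fun x : S => f x - g x) = nrm (fun x => g x - f x).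
Proof. unfold nrm. f_equal. extensionality x. apply Rabs_minus_sym. Qed.

Lemma nrm_self f : nrm (fun x : S => f x - f x) = 0.
Proof. unfold nrm. replace (fun x => Rabs (f x - f x)) with (fun _ : S => 0). apply csum_0.
  extensionality x. rewrite Rminus_diag, Rabs_R0; auto. Qed.

Lemma nonexp_iter pol q mu nu n : summ mu -> summ nu -> is_policy S A pol -> is_dynamics S A q ->
  nrm (fun s => iter_step S A n pol q mu s - iter_step S A n pol q nu s) <= nrm (fun s => mu s - nu s).
Proof.
  intros Hm Hn Hp Hq. induction n; simpl. lra.
  eapply Rle_trans; [|exact IHn]. apply (nonexp S A); auto.
  - clear IHn. induction n; simpl; auto. apply step_summ; auto.
  - clear IHn. induction n; simpl; auto. apply step_summ; auto.
Qed.

Lemma telescope pol1 q1 pol2 q2 mu d : pm mu ->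
  is_policy S A pol1 -> is_dynamics S A q1 -> is_policy S A pol2 -> is_dynamics S A q2 ->
  (forall j, nrm (fun s => step S A pol1 q1 (iter_step S A j pol1 q1 mu) s - step S A pol2 q2 (iter_step S A j pol1 q1 mu) s) <= d) ->
  forall n, nrm (fun s => iter_step S A n pol1 q1 mu s - iter_step S A n pol2 q2 mu s) <= INR n * d.
Proof.
  intros Hm Hp1 Hq1 Hp2 Hq2 Hd n. induction n.
  - simpl. rewrite nrm_self. lra.
  - rewrite S_INR. simpl.
    assert (X1: pm (iter_step S A n pol1 q1 mu)) by (apply iter_pm; auto).
    assert (X2: pm (iter_step S A n pol2 q2 mu)) by (apply iter_pm; auto).
    destruct X1 as [_ [X1 _]]. destruct X2 as [_ [X2 _]].
    eapply Rle_trans. apply (nrm_tri _ (step S A pol2 q2 (iter_step S A n pol1 q1 mu))).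
    apply step_summ; auto. apply step_summ; auto. apply step_summ; auto.
    specialize (Hd n). pose proof (nonexp S A pol2 q2 _ _ X1 X2 Hp2 Hq2). lra.
Qed.

End D.

Lemma shift_sum g k N : 0 < g < 1 ->
  sum_f_R0 (fun t => g ^ t * INR (t - k)) N +
  (if Nat.leb k (N + 1) then g ^ (N + 1) * (INR (N + 1 - k) / (1 - g) + g / (1 - g) ^ 2)
   else g ^ (k + 1) / (1 - g) ^ 2) <= g ^ (k + 1) / (1 - g) ^ 2.
Proof.
  intros Hg. assert (Hg1: 1 - g > 0) by lra.
  induction N.
  - simpl sum_f_R0. replace (0 - k)%nat with 0%nat by lia. simpl INR.
    destruct (Nat.leb_spec k (0 + 1)).
    + destruct k as [|[|k]]; [| |lia]; simpl; right; field; lra.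
    + lra.
  - replace (sum_f_R0 (fun t => g ^ t * INR (t - k)) (S N)) with
      (sum_f_R0 (fun t => g ^ t * INR (t - k)) N + g ^ (S N) * INR (S N - k)) by reflexivity.
    destruct (Nat.leb_spec k (N + 1)); destruct (Nat.leb_spec k (S N + 1)); try lia.
    + replace (S N + 1 - k)%nat with (S (N + 1 - k)) by lia. replace (S N - k)%nat with (N + 1 - k)%nat by lia.
      rewrite S_INR. replace (S N + 1)%nat with (S (N + 1)) by lia. replace (S N) with (N + 1)%nat in * by lia.
      simpl pow. eapply Rle_trans; [|exact IHN]. right. field. lra.
    + replace (S N - k)%nat with 0%nat by lia. replace (S N + 1 - k)%nat with 0%nat by lia.
      replace (k + 1)%nat with (S (S N + 1)) in * by lia. simpl INR. rewrite Rmult_0_r, Rplus_0_r.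
      eapply Rle_trans; [|exact IHN]. right. simpl pow. field. lra.
    + replace (S N - k)%nat with 0%nat by lia. simpl INR. rewrite Rmult_0_r, Rplus_0_r. auto.
Qed.

Lemma div_nonneg a b : 0 <= a -> 0 < b -> 0 <= a / b.
Proof. intros; unfold Rdiv; apply Rmult_le_pos; auto; left; apply Rinv_0_lt_compat; auto. Qed.

Lemma shift_sum_le g k N : 0 < g < 1 ->
  sum_f_R0 (fun t => g ^ t * INR (t - k)) N <= g ^ (k + 1) / (1 - g) ^ 2.
Proof.
  intros Hg. pose proof (shift_sum g k N Hg). assert (Hg1: 1 - g > 0) by lra.
  destruct (Nat.leb k (N + 1)).
  - assert (0 <= g ^ (N + 1) * (INR (N + 1 - k) / (1 - g) + g / (1 - g) ^ 2)); [|lra].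
    apply Rmult_le_pos. apply pow_le; lra. apply Rplus_le_le_0_compat.
    apply div_nonneg; [apply pos_INR|lra]. apply div_nonneg; [lra|]. apply pow_lt; lra.
  - assert (0 <= g ^ (k + 1) / (1 - g) ^ 2); [|lra]. apply div_nonneg. apply pow_le; lra. apply pow_lt; lra.
Qed.

Lemma geom_le g N : 0 < g < 1 -> sum_f_R0 (fun t => g ^ t) N <= 1 / (1 - g).
Proof.
  intros Hg. rewrite tech3 by lra. pose proof (pow_le g (S N)). unfold Rdiv.
  apply Rmult_le_compat_r. left; apply Rinv_0_lt_compat; lra. lra.
Qed.

Lemma series_conv g (a : nat -> R) M : 0 < g < 1 -> (forall t, Rabs (a t) <= M) ->
  Un_cv (fun N => sum_f_R0 (fun t => g ^ t * a t) N) (lim (fun N => sum_f_R0 (fun t => g ^ t * a t) N)).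
Proof.
  intros Hg HM. destruct (abs_cv (fun t => g ^ t * a t) (M * (1 / (1 - g)))) as [l Hl].
  - intro N. eapply Rle_trans. apply sum_Rle with (Bn := fun t => M * g ^ t).
    intros n _. rewrite Rabs_mult, Rabs_pos_eq. rewrite Rmult_comm. apply Rmult_le_compat_r. apply pow_le; lra. auto.
    apply pow_le; lra.
    replace (sum_f_R0 (fun t => M * g ^ t) N) with (M * sum_f_R0 (fun t => g ^ t) N) by (rewrite scal_sum; apply sum_ext; intro; ring).
    apply Rmult_le_compat_l. specialize (HM 0%nat). pose proof (Rabs_pos (a 0%nat)). lra.
    apply geom_le; auto.
  - rewrite (lim_eq (fun N => sum_f_R0 (fun t => g ^ t * a t) N) l Hl). auto.
Qed.

Lemma dist_inhab (X : CountType) mu : is_dist X mu -> exists x : X, True.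
Proof.
  intros H. destruct (classic (exists x : X, True)) as [e|n]; auto. exfalso.
  destruct (dist_prop X mu H) as [_ [_ H1]].
  replace mu with (fun _ : X => 0) in H1 by (extensionality x; exfalso; apply n; eauto).
  rewrite csum_0 in H1. lra.
Qed.

Section F.
Variables S A : CountType.

Lemma expect_nonneg pol mu f : pm S mu -> is_policy S A pol -> (forall s a, 0 <= f s a <= 1) ->
  0 <= expect_sa S A mu pol f.
Proof.
  intros [H0 [Hs _]] Hp Hf. unfold expect_sa.
  assert (P: forall s, (forall a, 0 <= pol s a) /\ summ (pol s) /\ csum A (pol s) = 1) by (intro; apply dist_prop; auto).
  assert (I: forall s, summ (fun a => mu s * pol s a * f s a)).
  { intro s. eapply summ_dom; [|apply (summ_scal A (mu s)); apply P]. intro a. cbv beta.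
    pose proof (H0 s). pose proof (proj1 (P s) a). destruct (Hf s a). assert (0 <= mu s * pol s a) by nra.
    rewrite (Rabs_pos_eq (mu s * pol s a * f s a)), (Rabs_pos_eq (mu s * pol s a)); nra. }
  apply csum_ge0.
  - eapply summ_dom; [|exact Hs]. intro s. cbv beta.
    assert (0 <= csum A (fun a => mu s * pol s a * f s a) <= mu s).
    { split. apply csum_ge0; auto. intro a. pose proof (H0 s). pose proof (proj1 (P s) a). destruct (Hf s a).
      assert (0 <= mu s * pol s a) by nra. nra.
      assert (Em: csum A (fun a => mu s * pol s a) = mu s) by (rewrite csum_scal, (proj2 (proj2 (P s))); [ring|apply P]).
      apply Rle_trans with (csum A (fun a => mu s * pol s a)); [|right; exact Em]. apply csum_le; auto. apply summ_scal, P.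
      intro a. pose proof (H0 s). pose proof (proj1 (P s) a). destruct (Hf s a). assert (0 <= mu s * pol s a) by nra. nra. }
    rewrite (Rabs_pos_eq (csum _ _)), (Rabs_pos_eq (mu s)); lra.
  - intro s. apply csum_ge0; auto. intro a. pose proof (H0 s). pose proof (proj1 (P s) a). destruct (Hf s a).
    assert (0 <= mu s * pol s a) by nra. nra.
Qed.

Lemma exp_diff pol r rmax mu nu : is_policy S A pol -> (forall s a, Rabs (r s a) <= rmax) -> 0 <= rmax ->
  summ mu -> summ nu ->
  Rabs (expect_sa S A mu pol r - expect_sa S A nu pol r) <= rmax * nrm (fun s => mu s - nu s).
Proof.
  intros Hp Hr Hr0 Hm Hn.
  assert (P: forall s, (forall a, 0 <= pol s a) /\ summ (pol s) /\ csum A (pol s) = 1) by (intro; apply dist_prop; auto).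
  set (g := fun s => csum A (fun a => pol s a * r s a)).
  assert (Sg: forall s, summ (fun a => pol s a * r s a)).
  { intro s. eapply summ_dom; [|apply (summ_scal A rmax); apply P]. intro a. cbv beta.
    pose proof (proj1 (P s) a). pose proof (Hr s a). rewrite Rabs_mult, (Rabs_pos_eq (pol s a)), (Rabs_pos_eq (rmax * pol s a)); nra. }
  assert (Bg: forall s, Rabs (g s) <= rmax).
  { intro s. unfold g. eapply Rle_trans. apply csum_abs; auto. unfold nrm.
    assert (Em: csum A (fun a => rmax * pol s a) = rmax) by (rewrite csum_scal, (proj2 (proj2 (P s))); [ring|apply P]).
    apply Rle_trans with (csum A (fun a => rmax * pol s a)); [|right; exact Em]. apply csum_le. apply summ_abs; auto. apply summ_scal, P.
    intro a. pose proof (proj1 (P s) a). pose proof (Hr s a). rewrite Rabs_mult, (Rabs_pos_eq (pol s a)); nra. }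
  assert (E: forall m, expect_sa S A m pol r = csum S (fun s => m s * g s)).
  { intro m. unfold expect_sa. f_equal. extensionality s. unfold g. rewrite <- csum_scal; auto. f_equal.
    extensionality a. ring. }
  assert (Smg: forall m, summ m -> summ (fun s => m s * g s)).
  { intros m Hm'. eapply summ_dom; [|apply (summ_scal S rmax); apply summ_abs; exact Hm']. intro s. cbv beta.
    pose proof (Bg s). rewrite !Rabs_mult, Rabs_Rabsolu, (Rabs_pos_eq rmax); auto.
    rewrite Rmult_comm. apply Rmult_le_compat_r; auto. apply Rabs_pos. }
  rewrite !E. rewrite <- csum_minus; auto.
  replace (fun s => mu s * g s - nu s * g s) with (fun s => (mu s - nu s) * g s) by (extensionality s; ring).
  eapply Rle_trans. apply csum_abs. apply Smg. apply summ_minus; auto.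
  unfold nrm. rewrite <- csum_scal. apply csum_le.
  apply summ_abs, Smg, summ_minus; auto. apply summ_scal, summ_abs, summ_minus; auto.
  intro s. rewrite Rabs_mult. rewrite Rmult_comm. apply Rmult_le_compat_r; auto. apply Rabs_pos.
  apply summ_abs, summ_minus; auto.
Qed.

End F.

Section G.
Variables (S A : CountType) (rho0 : S -> R) (gamma : R)
  (r : S -> A -> R) (rmax : R)
  (p phat : S -> A -> S -> R) (piD pi : S -> A -> R) (k : nat)
  (eps_m eps_pi : R).
Hypothesis Hrho : is_dist S rho0.
Hypothesis Hg : 0 < gamma < 1.
Hypothesis Hr : forall s a, Rabs (r s a) <= rmax.
Hypothesis Hp : is_dynamics S A p.
Hypothesis Hph : is_dynamics S A phat.
Hypothesis HpD : is_policy S A piD.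
Hypothesis Hpi : is_policy S A pi.
Hypothesis Hm : forall t : nat,
     expect_sa S A (state_dist S A rho0 piD p t) piD
       (fun s a => D_TV S (p s a) (phat s a)) <= eps_m.
Hypothesis Hpe : forall s : S, D_TV A (piD s) (pi s) <= eps_pi.

Lemma rho_pm : pm S rho0.
Proof. destruct (dist_prop S _ Hrho) as [? [? ?]]. split; auto. split; auto. lra. Qed.

Lemma eps_nonneg : 0 <= eps_pi /\ 0 <= eps_m /\ 0 <= rmax.
Proof.
  destruct (dist_inhab S _ Hrho) as [s0 _]. destruct (dist_inhab A _ (HpD s0)) as [a0 _].
  split; [|split].
  - pose proof (Hpe s0). pose proof (DTV_bounds A _ _ (HpD s0) (Hpi s0)). lra.
  - eapply Rle_trans; [|apply (Hm 0%nat)]. apply expect_nonneg. apply rho_pm. auto.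
    intros s a. apply (DTV_bounds S _ _ (Hp s a) (Hph s a)).
  - pose proof (Hr s0 a0). pose proof (Rabs_pos (r s0 a0)). lra.
Qed.

Lemma pol_term nu : pm S nu -> csum S (fun s => nu s * D_TV A (piD s) (pi s)) <= eps_pi.
Proof.
  intros [H0 [Hs H1]]. destruct eps_nonneg as [He _].
  assert (B: forall s, 0 <= D_TV A (piD s) (pi s) <= 1) by (intro s; apply (DTV_bounds A _ _ (HpD s) (Hpi s))).
  eapply Rle_trans. apply csum_le with (g := fun s => eps_pi * nu s).
  - eapply summ_dom; [|exact Hs]. intro s. cbv beta. pose proof (B s). pose proof (H0 s).
    rewrite Rabs_mult, (Rabs_pos_eq (nu s)), (Rabs_pos_eq (D_TV _ _ _)); nra.
  - apply summ_scal; auto.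
  - intro s. pose proof (B s). pose proof (H0 s). pose proof (Hpe s). nra.
  - rewrite csum_scal; auto. nra.
Qed.

Lemma DTV_self (X : CountType) (mu : X -> R) : D_TV X mu mu = 0.
Proof. unfold D_TV. replace (fun x => Rabs (mu x - mu x)) with (fun _ : X => 0). rewrite csum_0. ring.
  extensionality x. rewrite Rminus_diag, Rabs_R0; auto. Qed.

Lemma oneDP nu : pm S nu -> nrm (fun s' => step S A piD p nu s' - step S A pi p nu s') <= 2 * eps_pi.
Proof.
  intros Hn. pose proof Hn as [H0 [Hs H1]].
  eapply Rle_trans. apply onestep; auto.
  replace (fun s a => D_TV S (p s a) (p s a)) with (fun (_ : S) (_ : A) => 0) by (extensionality s; extensionality a; rewrite DTV_self; auto).
  unfold expect_sa. replace (fun s => csum A (fun a => nu s * piD s a * 0)) with (fun _ : S => 0).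
  rewrite csum_0. pose proof (pol_term nu Hn). lra.
  extensionality s. replace (fun a => nu s * piD s a * 0) with (fun _ : A => 0) by (extensionality a; ring).
  rewrite csum_0; auto.
Qed.

Lemma oneDQ n : nrm (fun s' => step S A piD p (state_dist S A rho0 piD p n) s' - step S A pi phat (state_dist S A rho0 piD p n) s') <= 2 * (eps_m + eps_pi).
Proof.
  assert (Hn: pm S (state_dist S A rho0 piD p n)) by (apply iter_pm; auto; apply rho_pm).
  pose proof Hn as [H0 [Hs H1]].
  eapply Rle_trans. apply onestep; auto.
  pose proof (pol_term _ Hn). pose proof (Hm n). lra.
Qed.

Lemma dist_bound t :
  nrm (fun s => state_dist S A rho0 pi p t s - branch_state_dist S A rho0 piD p pi phat k t s)
  <= 2 * (INR (t - k) * eps_pi + INR k * (eps_m + 2 * eps_pi)).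
Proof.
  destruct eps_nonneg as [He [Hem Hr0]].
  unfold state_dist, branch_state_dist.
  set (m := (t - k)%nat). set (j := (t - m)%nat).
  assert (Ht: t = (j + m)%nat) by (unfold j, m; lia).
  assert (Hj: (j <= k)%nat) by (unfold j, m; lia).
  replace (iter_step S A t pi p rho0) with (iter_step S A j pi p (iter_step S A m pi p rho0)) by (rewrite iter_add, <- Ht; auto).
  pose proof rho_pm as Hrh.
  set (x0 := iter_step S A m pi p rho0). set (y0 := iter_step S A m piD p rho0).
  assert (Px0: pm S x0) by (apply iter_pm; auto).
  assert (Py0: pm S y0) by (apply iter_pm; auto).
  assert (T1: nrm (fun s => y0 s - x0 s) <= INR m * (2 * eps_pi)).
  { apply telescope; auto. intro i. apply oneDP. apply iter_pm; auto. }
  assert (T2: nrm (fun s => iter_step S A j piD p y0 s - iter_step S A j pi p y0 s) <= INR j * (2 * eps_pi)).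
  { apply telescope; auto. intro i. apply oneDP. apply iter_pm; auto. }
  assert (T3: nrm (fun s => iter_step S A j piD p y0 s - iter_step S A j pi phat y0 s) <= INR j * (2 * (eps_m + eps_pi))).
  { apply telescope; auto. intro i. unfold y0. rewrite iter_add. apply oneDQ. }
  assert (T0: nrm (fun s => iter_step S A j pi p x0 s - iter_step S A j pi p y0 s) <= nrm (fun s => x0 s - y0 s)).
  { apply nonexp_iter; auto. apply Px0. apply Py0. }
  rewrite (nrm_sym S x0 y0) in T0. rewrite (nrm_sym S (iter_step S A j piD p y0) (iter_step S A j pi p y0)) in T2.
  assert (U: forall n pol q mu, pm S mu -> is_policy S A pol -> is_dynamics S A q -> summ (iter_step S A n pol q mu)).
  { intros. apply iter_pm; auto. }
  eapply Rle_trans. apply (nrm_tri S _ (iter_step S A j pi p y0)); apply U; auto.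
  eapply Rle_trans. apply Rplus_le_compat_l. apply (nrm_tri S _ (iter_step S A j piD p y0)); apply U; auto.
  assert (INR j <= INR k) by (apply le_INR; auto).
  assert (0 <= INR j) by apply pos_INR.
  fold m. nra.
Qed.

Lemma main :
  eta S A rho0 gamma r pi p >=
  eta_branch S A rho0 gamma r piD p pi phat k
  - 2 * rmax * (gamma ^ (k + 1) * eps_pi / (1 - gamma) ^ 2
                + (gamma ^ k + 2) * eps_pi / (1 - gamma)
                + INR k / (1 - gamma) * (eps_m + 2 * eps_pi)).
Proof.
  destruct eps_nonneg as [He [Hem Hr0]].
  set (Et := fun t => expect_sa S A (state_dist S A rho0 pi p t) pi r).
  set (Ft := fun t => expect_sa S A (branch_state_dist S A rho0 piD p pi phat k t) pi r).
  assert (PE: forall t, pm S (state_dist S A rho0 pi p t)) by (intro; apply iter_pm; auto; apply rho_pm).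
  assert (PF: forall t, pm S (branch_state_dist S A rho0 piD p pi phat k t)) by (intro; apply iter_pm; auto; apply iter_pm; auto; apply rho_pm).
  assert (Bnd: forall mu, pm S mu -> Rabs (expect_sa S A mu pi r) <= rmax).
  { intros mu [H0 [Hs H1]]. pose proof (exp_diff S A pi r rmax mu (fun _ => 0) Hpi Hr Hr0 Hs (summ_0 S)).
    unfold expect_sa at 2 in H. replace (fun s => csum A (fun a => 0 * pi s a * r s a)) with (fun _ : S => 0) in H.
    rewrite csum_0, Rminus_0_r in H. replace (fun s => mu s - 0) with mu in H by (extensionality s; ring).
    rewrite (nrm_pos S mu H0) in H. nra.
    extensionality s. replace (fun a => 0 * pi s a * r s a) with (fun _ : A => 0) by (extensionality a; ring). rewrite csum_0; auto. }
  pose proof (series_conv gamma Et rmax Hg (fun t => Bnd _ (PE t))) as Hu.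
  pose proof (series_conv gamma Ft rmax Hg (fun t => Bnd _ (PF t))) as Hv.
  unfold eta, eta_branch. fold (Et). 
  change (fun t => gamma ^ t * expect_sa S A (state_dist S A rho0 pi p t) pi r) with (fun t => gamma ^ t * Et t).
  change (fun t => gamma ^ t * expect_sa S A (branch_state_dist S A rho0 piD p pi phat k t) pi r) with (fun t => gamma ^ t * Ft t).
  set (Bd := 2 * rmax * (gamma ^ (k + 1) * eps_pi / (1 - gamma) ^ 2
                + (gamma ^ k + 2) * eps_pi / (1 - gamma)
                + INR k / (1 - gamma) * (eps_m + 2 * eps_pi))).
  apply Rle_ge.
  cut (lim (fun N => sum_f_R0 (fun t => gamma ^ t * Ft t) N) - lim (fun N => sum_f_R0 (fun t => gamma ^ t * Et t) N) <= Bd). lra.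
  eapply Rle_cv_lim; [|exact (CV_minus _ _ _ _ Hv Hu)|apply Un_cv_const].
  intro N. cbv beta. rewrite <- minus_sum.
  assert (G0: 1 - gamma > 0) by lra.
  set (c := eps_m + 2 * eps_pi).
  eapply Rle_trans. apply sum_Rle with (Bn := fun t => (2 * rmax * eps_pi) * (gamma ^ t * INR (t - k)) + (2 * rmax * INR k * c) * gamma ^ t).
  { intros t _. pose proof (dist_bound t) as Dt. fold c in Dt.
    pose proof (exp_diff S A pi r rmax _ _ Hpi Hr Hr0 (proj1 (proj2 (PE t))) (proj1 (proj2 (PF t)))) as Ed.
    fold (Et t) (Ft t) in Ed.
    assert (Ft t - Et t <= rmax * (2 * (INR (t - k) * eps_pi + INR k * c))).
    { rewrite Rabs_minus_sym in Ed. pose proof (Rle_abs (Ft t - Et t)).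
      assert (rmax * nrm (fun s => state_dist S A rho0 pi p t s - branch_state_dist S A rho0 piD p pi phat k t s) <=
              rmax * (2 * (INR (t - k) * eps_pi + INR k * c))) by (apply Rmult_le_compat_l; auto). lra. }
    pose proof (pow_le gamma t (Rlt_le _ _ (proj1 Hg))).
    apply Rle_trans with (gamma ^ t * (rmax * (2 * (INR (t - k) * eps_pi + INR k * c)))).
    rewrite <- Rmult_minus_distr_l. apply Rmult_le_compat_l; auto. right; ring. }
  rewrite sum_plus.
  replace (sum_f_R0 (fun t => 2 * rmax * eps_pi * (gamma ^ t * INR (t - k))) N) with
    ((2 * rmax * eps_pi) * sum_f_R0 (fun t => gamma ^ t * INR (t - k)) N) by (rewrite scal_sum; apply sum_ext; intro; ring).
  replace (sum_f_R0 (fun t => 2 * rmax * INR k * c * gamma ^ t) N) with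
    ((2 * rmax * INR k * c) * sum_f_R0 (fun t => gamma ^ t) N) by (rewrite scal_sum; apply sum_ext; intro; ring).
  pose proof (shift_sum_le gamma k N Hg) as S1. pose proof (geom_le gamma N Hg) as S2.
  assert (C0: 0 <= c) by (unfold c; lra). pose proof (pos_INR k) as K0.
  assert (0 <= 2 * rmax * eps_pi) by (apply Rmult_le_pos; lra).
  assert (0 <= 2 * rmax * INR k * c) by (apply Rmult_le_pos; [apply Rmult_le_pos|]; lra).
  apply Rle_trans with (2 * rmax * eps_pi * (gamma ^ (k + 1) / (1 - gamma) ^ 2) + 2 * rmax * INR k * c * (1 / (1 - gamma))).
  apply Rplus_le_compat; apply Rmult_le_compat_l; auto.
  unfold Bd. fold c.
  assert (0 <= (gamma ^ k + 2) * eps_pi / (1 - gamma)).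
  { apply div_nonneg; [|lra]. apply Rmult_le_pos; auto. pose proof (pow_le gamma k). lra. }
  assert (E1: 2 * rmax * eps_pi * (gamma ^ (k + 1) / (1 - gamma) ^ 2) + 2 * rmax * INR k * c * (1 / (1 - gamma))
     = 2 * rmax * (gamma ^ (k + 1) * eps_pi / (1 - gamma) ^ 2 + INR k / (1 - gamma) * c)) by (field; lra).
  rewrite E1. apply Rmult_le_compat_l. lra. lra.
Qed.

End G.

Theorem theorem2 (S A : CountType) (rho0 : S -> R) (gamma : R)
  (r : S -> A -> R) (rmax : R)
  (p phat : S -> A -> S -> R) (piD pi : S -> A -> R) (k : nat)
  (eps_m eps_pi : R) :
  is_dist S rho0 ->
  0 < gamma < 1 ->
  (forall s a, Rabs (r s a) <= rmax) ->
  is_dynamics S A p -> is_dynamics S A phat ->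
  is_policy S A piD -> is_policy S A pi ->
  (forall t : nat,
     expect_sa S A (state_dist S A rho0 piD p t) piD
       (fun s a => D_TV S (p s a) (phat s a)) <= eps_m) ->
  (forall s : S, D_TV A (piD s) (pi s) <= eps_pi) ->
  eta S A rho0 gamma r pi p >=
  eta_branch S A rho0 gamma r piD p pi phat k
  - 2 * rmax * (gamma ^ (k + 1) * eps_pi / (1 - gamma) ^ 2
                + (gamma ^ k + 2) * eps_pi / (1 - gamma)
                + INR k / (1 - gamma) * (eps_m + 2 * eps_pi)).
Proof. intros. apply main; auto. Qed.
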